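(* Let $G$ be a simple directed graph. The unrestricted transition matrix of simple moves $T^u_{\mathrm{SM}}=p_{\mathrm{SEF}}T^u_{\mathrm{SEF}}+p_{\mathrm{DEM}}T^u_{\mathrm{DEM}}$ (with $p_{\mathrm{SEF}},p_{\mathrm{DEM}}\in(0,1)$, $p_{\mathrm{SEF}}+p_{\mathrm{DEM}}=1$) is doubly stochastic and irreducible on the state space $\mathcal{G}_0^\infty(G)$. If $G$ further contains at least one double edge, $T^u_{\mathrm{SM}}$ is also aperiodic.
   Context: A simple directed graph is a pair $G=(V,E)$ with $V$ finite and $E\subseteq (V\times V)\setminus\{(v,v):v\in V\}$. An edge $(i,j)\in E$ is a single edge if $(j,i)\notin E$; an ordered pair $(k,l)$ is a double edge if both $(k,l),(l,k)\in E$. $\mathrm{pr}(V,E)=(V,\{\{u,v\}:(u,v)\in E\})$. $\mathcal{G}_0^\infty(G)$ is the (finite) set of all simple directed graphs $G'$ on $V$ with $\mathrm{pr}(G')=\mathrm{pr}(G)$ and the same number of directed edges as $G$. Moves: $\mathrm{SEF}_{i,j}(V,E)=(V,(E\setminus\{(i,j)\})\cup\{(j,i)\})$ for a single edge $(i,j)$; $\mathrm{DEM}^{k,l}_{i,j}(V,E)=(V,(E\setminus\{(k,l)\})\cup\{(j,i)\})$ for a single edge $(i,j)$ and a double edge $(k,l)$. Transition matrices on $\mathcal{G}_0^\infty(G)$: $T^u_{\mathrm{SEF}}(H,H')$ is the probability that a single edge $(i,j)$ of $H$, drawn uniformly among all single edges of $H$, satisfies $\mathrm{SEF}_{i,j}(H)=H'$;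 $T^u_{\mathrm{DEM}}(H,H')$ is the probability that a single edge $(i,j)$ and a double edge $(k,l)$ of $H$, each drawn uniformly among the single (resp. double) edges of $H$, satisfy $\mathrm{DEM}^{k,l}_{i,j}(H)=H'$. Convention: if $H$ has no eligible edges for a move (no single edge for SEF; no single edge or no double edge for DEM), that move leaves $H$ unchanged, i.e. the corresponding matrix has $1$ on the diagonal entry $(H,H)$. A matrix is doubly stochastic if it and its transpose are stochastic; irreducible if every state is reachable from every other with positive probability in finitely many steps; aperiodic if the gcd of the return times of the chain is $1$. *)

(* Defs.v *)
From HB Require Import structures.
From mathcomp Require Import all_boot all_order all_algebra.
Set Implicit Arguments. Unset Strict Implicit. Unset Printing Implicit Defensive.
Import Order.TTheory GRing.Theory Num.Theory.
Local Open Scope ring_scope.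

Section Graphs.
Variable V : finType.

Definition loopless (E : {set V * V}) : bool := [forall v : V, (v, v) \notin E].

Definition pr (E : {set V * V}) : {set {set V}} := [set [set e.1; e.2] | e in E].

Definition GG0 (E : {set V * V}) : {set {set V * V}} :=
  [set E' : {set V * V} | [&& loopless E', pr E' == pr E & #|E'| == #|E|]].

Definition single_edges (H : {set V * V}) : {set V * V} :=
  [set e in H | (e.2, e.1) \notin H].
Definition double_edges (H : {set V * V}) : {set V * V} :=
  [set e in H | (e.2, e.1) \in H].

Definition SEF (e : V * V) (H : {set V * V}) : {set V * V} :=
  (H :\ e) :|: [set (e.2, e.1)].
(* DEM^{k,l}_{i,j} with e = (i,j), d = (k,l) *)
Definition DEM (e d : V * V) (H : {set V * V}) : {set V * V} :=
  (H :\ d) :|: [set (e.2, e.1)].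

Variable R : realFieldType.

Definition T_SEF (H H' : {set V * V}) : R :=
  if single_edges H == set0 then (H == H')%:R
  else #|[set e in single_edges H | SEF e H == H']|%:R / #|single_edges H|%:R.

Definition T_DEM (H H' : {set V * V}) : R :=
  if (single_edges H == set0) || (double_edges H == set0) then (H == H')%:R
  else #|[set p in setX (single_edges H) (double_edges H) | DEM p.1 p.2 H == H']|%:R
       / (#|single_edges H| * #|double_edges H|)%:R.

Definition T_SM (pSEF pDEM : R) (H H' : {set V * V}) : R :=
  pSEF * T_SEF H H' + pDEM * T_DEM H H'.

(* Matrices on a finite state space S (entries outside S are irrelevant). *)
Definition doubly_stochastic (S : {set {set V * V}}) (T : {set V * V} -> {set V * V} -> R) : Prop :=
  [/\ (forall H H', H \in S -> H' \in S -> 0 <= T H H'),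
      (forall H, H \in S -> \sum_(H' in S) T H H' = 1) &
      (forall H', H' \in S -> \sum_(H in S) T H H' = 1)].

Fixpoint Tpow (S : {set {set V * V}}) (T : {set V * V} -> {set V * V} -> R) (n : nat)
  (H H' : {set V * V}) : R :=
  match n with
  | 0 => (H == H')%:R
  | n'.+1 => \sum_(K in S) T H K * Tpow S T n' K H'
  end.

Definition irreducible (S : {set {set V * V}}) (T : {set V * V} -> {set V * V} -> R) : Prop :=
  forall H H', H \in S -> H' \in S -> exists n : nat, 0 < Tpow S T n H H'.

(* gcd of the return times {n > 0 | T^n(H,H) > 0} equals 1, for every state H:
   the only natural number dividing all return times is 1. *)
Definition aperiodic (S : {set {set V * V}}) (T : {set V * V} -> {set V * V} -> R) : Prop :=
  forall H, H \in S ->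
    forall d : nat, (forall n : nat, (0 < n)%N -> 0 < Tpow S T n H H -> (d %| n)%N) -> d = 1%N.

End Graphs.

(* Main.v *)
Set Warnings "-notation-overridden,-ambiguous-paths".
Require Import Defs.
From HB Require Import structures.
From mathcomp Require Import all_boot all_order all_algebra lra.
Import Order.TTheory GRing.Theory Num.Theory.

Set Implicit Arguments. Unset Strict Implicit. Unset Printing Implicit Defensive.

Lemma set2_eq (T : finType) (a b c d : T) :
  [set a; b] = [set c; d] -> (a = c /\ b = d) \/ (a = d /\ b = c).
Proof.
move=> h.
have: a \in [set c; d] by rewrite -h set21.
have: b \in [set c; d] by rewrite -h set22.
have: c \in [set a; b] by rewrite h set21.
have: d \in [set a; b] by rewrite h set22.
rewrite !inE => /orP[]/eqP H1 /orP[]/eqP H2 /orP[]/eqP H3 /orP[]/eqP H4; subst; auto.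
Qed.

Lemma swap_back (T : finType) (H : {set T}) x y :
  x \in H -> y \notin H -> ((H :\ x :|: [set y]) :\ y) :|: [set x] = H.
Proof.
move=> xH yH.
rewrite [H :\ x :|: _]setUC setU1K; last by rewrite inE negb_and yH orbT.
by rewrite setUC setD1K.
Qed.

Lemma swap3 (T : finType) (H : {set T}) x y z :
  x \in H -> y \notin H -> z \in H -> x != z ->
  ((H :\ x :|: [set y]) :\ z) :|: [set x] = H :\ z :|: [set y].
Proof.
move=> xH yH zH xz; apply/setP=> w; rewrite !inE.
case: (eqVneq w x) => [->|wx]; first by rewrite xH xz orbT.
case: (eqVneq w y) => [->|wy] /=.
  have yz : y != z by apply/eqP=> e; move: zH; rewrite -e (negbTE yH).
  by rewrite yz orbT.
by rewrite !orbF.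
Qed.

Section G.
Variable V : finType.
Variable E : {set V * V}.

Definition rv (e : V * V) := (e.2, e.1).
Definition pa (e : V * V) : {set V} := [set e.1; e.2].

Lemma inS H : (H \in GG0 E) = [&& loopless H, pr H == pr E & #|H| == #|E|].
Proof. by rewrite inE. Qed.

Lemma S_noloop H x : H \in GG0 E -> x \in H -> x.1 != x.2.
Proof.
rewrite inS => /and3P[/forallP lH _ _] xH; apply/eqP=> e.
by move: (lH x.1); rewrite {2}e -surjective_pairing xH.
Qed.

Lemma pr_mem (H : {set V * V}) x : x \in H -> [set x.1; x.2] \in pr H.
Proof. by move=> xH; apply/imsetP; exists x. Qed.

Lemma pr_memP (H : {set V * V}) a b : [set a; b] \in pr H -> (a, b) \in H \/ (b, a) \in H.
Proof.
case/imsetP=> x xH /set2_eq [[-> ->]|[-> ->]]; rewrite -surjective_pairing; auto.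
Qed.

Lemma S_swap H x y : H \in GG0 E -> x \in H -> y \notin H -> y.1 != y.2 ->
  [set y.1; y.2] \in pr (H :\ x) :|: [set [set x.1; x.2]] ->
  [set x.1; x.2] \in pr (H :\ x) :|: [set [set y.1; y.2]] ->
  H :\ x :|: [set y] \in GG0 E.
Proof.
move=> HS xH yH yl hy hx; move: (HS); rewrite !inS => /and3P[/forallP lH /eqP prH /eqP cH].
apply/and3P; split.
- rewrite /loopless; apply/forallP=> v; rewrite !inE negb_or; apply/andP; split.
    by rewrite negb_and (negbTE (lH v)) orbT.
  by apply/eqP=> e; move: yl; rewrite -e eqxx.
- rewrite -prH /pr imsetU imset_set1 -{2}(setD1K xH) imsetU1.
  move: hy hx; rewrite /pr.
  set A := [set [set e.1; e.2] | e in H :\ x].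
  set a := [set x.1; x.2]; set b := [set y.1; y.2].
  case: (eqVneq b a) => [->|ba]; first by rewrite setUC.
  rewrite !inE (negbTE ba) orbF eq_sym (negbTE ba) orbF => bA aA.
  apply/eqP/setP=> w; rewrite !inE.
  by case: eqP=> [->|]; case: eqP => [->|] /=; rewrite ?bA ?aA ?orbT ?orbF.
- rewrite -cH (cardsD1 x H) xH setUC cardsU1.
  by rewrite inE negb_and yH orbT.
Qed.

Lemma notin_neq (H : {set V * V}) a b : a \in H -> b \notin H -> a != b.
Proof. by move=> aH bH; apply/eqP=> e; rewrite -e aH in bH. Qed.

Lemma SEF_props H i j : H \in GG0 E -> (i, j) \in single_edges H ->
  [/\ SEF (i, j) H \in GG0 E, (j, i) \in single_edges (SEF (i, j) H)
    & SEF (j, i) (SEF (i, j) H) = H].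
Proof.
move=> HS; rewrite inE /= => /andP[eH reH].
have el := S_noloop HS eH; rewrite /= in el.
have ji : (j, i) != (i, j) by rewrite xpair_eqE negb_and eq_sym el.
split.
- apply: S_swap => //=; first by rewrite eq_sym.
    by rewrite [[set j; i]]setUC !inE eqxx orbT.
  by rewrite [[set j; i]]setUC !inE eqxx orbT.
- have ij : (i, j) != (j, i) by rewrite eq_sym.
  by rewrite /SEF !inE /= !eqxx /= orbT (negbTE ij).
- exact: swap_back.
Qed.

Lemma DEM_props H i j k l : H \in GG0 E -> (i, j) \in single_edges H ->
  (k, l) \in double_edges H ->
  [/\ DEM (i, j) (k, l) H \in GG0 E, (l, k) \in single_edges (DEM (i, j) (k, l) H),
      (j, i) \in double_edges (DEM (i, j) (k, l) H)
    & DEM (l, k) (j, i) (DEM (i, j) (k, l) H) = H].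
Proof.
move=> HS eS dS.
have /andP[eH reH] : ((i, j) \in H) && ((j, i) \notin H) by move: eS; rewrite inE.
have /andP[dH rdH] : ((k, l) \in H) && ((l, k) \in H) by move: dS; rewrite inE.
have kl := S_noloop HS dH; rewrite /= in kl.
have ji_kl : (j, i) != (k, l) by rewrite eq_sym (notin_neq dH reH).
have lk_ji : (l, k) != (j, i) by rewrite (notin_neq rdH reH).
have lk_kl : (l, k) != (k, l) by rewrite xpair_eqE negb_and eq_sym kl.
have ij_kl : (i, j) != (k, l).
  by apply/eqP=> -[e1 e2]; subst; rewrite rdH in reH.
split.
- rewrite /DEM /=; apply: S_swap => //=; first by rewrite eq_sym (S_noloop HS eH).
    by rewrite [[set j; i]]setUC !inE; apply/orP; left; apply: (pr_mem (x := (i, j))); rewrite !inE ij_kl.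
  by rewrite [[set k; l]]setUC !inE; apply/orP; left; apply: (pr_mem (x := (l, k))); rewrite !inE lk_kl.
- have kl_ji : (k, l) != (j, i) by rewrite eq_sym.
  by rewrite /DEM !inE /= lk_kl rdH eqxx /= (negbTE kl_ji).
- by rewrite /DEM !inE /= eqxx /= ij_kl eH orbT.
- exact: swap_back.
Qed.

Lemma rvK : involutive rv. Proof. by case. Qed.

Lemma mem_rv (H : {set V * V}) e : (e \in rv @: H) = (rv e \in H).
Proof.
apply/imsetP/idP => [[x xH ->]|h]; first by rewrite rvK.
by exists (rv e); rewrite ?rvK.
Qed.

Lemma union_rv (H : {set V * V}) :
  H :|: rv @: H = [set e | [set e.1; e.2] \in pr H].
Proof.
apply/setP=> e; rewrite !inE mem_rv; apply/idP/idP.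
- case/orP=> h; first exact: pr_mem.
  by rewrite setUC; apply: (pr_mem h).
- case: e => a b /=; case/pr_memP => ->; rewrite ?orbT //.
Qed.

Lemma double_rv (H : {set V * V}) : double_edges H = H :&: rv @: H.
Proof. by apply/setP=> e; rewrite !inE mem_rv. Qed.

Lemma single_rv (H : {set V * V}) : single_edges H = H :\: rv @: H.
Proof. by apply/setP=> e; rewrite !inE mem_rv andbC. Qed.

Lemma card_rv (H : {set V * V}) : #|rv @: H| = #|H|.
Proof. by apply: card_imset; apply: (can_inj rvK). Qed.

Lemma card_const H : H \in GG0 E ->
  #|double_edges H| = #|double_edges E| /\ #|single_edges H| = #|single_edges E|.
Proof.
rewrite inS => /and3P[_ /eqP prH /eqP cH].
have hd : forall K : {set V * V}, #|double_edges K| = (#|K| + #|K| - #|[set e | [set e.1; e.2] \in pr K]|)%N.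
  by move=> K; rewrite -union_rv double_rv; have := cardsUI K (rv @: K); rewrite card_rv => <-; rewrite addKn.
have hs : forall K : {set V * V}, #|single_edges K| = (#|K| - #|double_edges K|)%N.
  by move=> K; rewrite single_rv double_rv -(cardsID (rv @: K) K) addKn.
have e1 : #|double_edges H| = #|double_edges E| by rewrite !hd prH cH.
by split=> //; rewrite !hs e1 cH.
Qed.
End G.

Lemma fiber_sum (X Y : finType) (A : {set X}) (S : {set Y}) (f : X -> Y) :
  (forall x, x \in A -> f x \in S) ->
  \sum_(y in S) #|[set x in A | f x == y]| = #|A|.
Proof.
move=> hf; rewrite -sum1_card (partition_big f (mem S)) //=.
by apply: eq_bigr => y _; rewrite sum1dep_card.
Qed.

Lemma inv_count (ST X : finType) (S : {set ST}) (M : ST -> {set X})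
  (f : X -> ST -> ST) (g : X -> X) H' :
  H' \in S ->
  (forall H x, H \in S -> x \in M H ->
     [/\ f x H \in S, g x \in M (f x H) & f (g x) (f x H) = H]) ->
  involutive g ->
  \sum_(H in S) #|[set x in M H | f x H == H']| = #|M H'|.
Proof.
move=> H'S hyp gK.
rewrite -(fiber_sum (A := M H') (S := S) (f := fun y => f y H')); last first.
  by move=> y yM; have [] := hyp _ _ H'S yM.
apply: eq_bigr => H HS.
rewrite -(card_imset _ (can_inj gK)); apply: eq_card => y.
rewrite inE; apply/imsetP/andP.
- case=> x; rewrite inE => /andP[xM /eqP fx] ->.
  have [_ gM inv] := hyp _ _ HS xM.
  by rewrite -fx; split=> //; rewrite inv.
- case=> yM /eqP fy; exists (g y); last by rewrite gK.
  have [_ gM inv] := hyp _ _ H'S yM.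
  by rewrite inE; rewrite fy in gM inv; rewrite gM inv eqxx.
Qed.

Local Open Scope ring_scope.

Section P.
Variable V : finType.
Variable E : {set V * V}.
Variable R : realFieldType.
Variables pSEF pDEM : R.
Hypothesis pS0 : 0 < pSEF.
Hypothesis pD0 : 0 < pDEM.

Notation S := (GG0 E).
Notation T := (T_SM pSEF pDEM).

Lemma T_SEF_ge0 (H H' : {set V * V}) : 0 <= T_SEF R H H'.
Proof. by rewrite /T_SEF; case: ifP => _ //; apply: divr_ge0. Qed.

Lemma T_DEM_ge0 (H H' : {set V * V}) : 0 <= T_DEM R H H'.
Proof. by rewrite /T_DEM; case: ifP => _ //; apply: divr_ge0. Qed.

Lemma T_ge0 (H H' : {set V * V}) : 0 <= T H H'.
Proof.
rewrite /T_SM; apply: addr_ge0; apply: mulr_ge0. all: try exact: ltW. all: try apply: T_SEF_ge0. all: try apply: T_DEM_ge0. Qed.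

Lemma T_pos_SEF (H H' : {set V * V}) : 0 < T_SEF R H H' -> 0 < T H H'.
Proof.
move=> h; rewrite /T_SM; have := mulr_gt0 pS0 h.
have := mulr_ge0 (ltW pD0) (T_DEM_ge0 H H'); lra.
Qed.

Lemma T_pos_DEM (H H' : {set V * V}) : 0 < T_DEM R H H' -> 0 < T H H'.
Proof.
move=> h; rewrite /T_SM; have := mulr_gt0 pD0 h.
have := mulr_ge0 (ltW pS0) (T_SEF_ge0 H H'); lra.
Qed.

Lemma T_SEF_pos (H : {set V * V}) e : e \in single_edges H -> 0 < T_SEF R H (SEF e H).
Proof.
move=> eS; rewrite /T_SEF.
have -> : (single_edges H == set0) = false by apply/negbTE/set0Pn; exists e.
apply: divr_gt0; rewrite ltr0n card_gt0; apply/set0Pn; first by exists e; apply/setIdP; split.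
by exists e.
Qed.

Lemma T_DEM_pos (H : {set V * V}) e d : e \in single_edges H -> d \in double_edges H ->
  0 < T_DEM R H (DEM e d H).
Proof.
move=> eS dD; rewrite /T_DEM.
have -> : (single_edges H == set0) = false by apply/negbTE/set0Pn; exists e.
have -> : (double_edges H == set0) = false by apply/negbTE/set0Pn; exists d.
apply: divr_gt0; rewrite ltr0n.
  by rewrite card_gt0; apply/set0Pn; exists (e, d); apply/setIdP; split => //; apply/setXP.
by rewrite muln_gt0 !card_gt0; apply/andP; split; apply/set0Pn; [exists e | exists d].
Qed.

Lemma Tpow_ge0 n (H H' : {set V * V}) : 0 <= Tpow S T n H H'.
Proof.
elim: n H => [|n IH] H /=; first by [].
by apply: sumr_ge0 => K _; apply: mulr_ge0; [apply: T_ge0 | apply: IH].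
Qed.

Lemma Tpow_step n (H K H' : {set V * V}) : K \in S -> 0 < T H K -> 0 < Tpow S T n K H' ->
  0 < Tpow S T n.+1 H H'.
Proof.
move=> KS hK hn /=; rewrite (bigD1 K) //=.
have := mulr_gt0 hK hn.
have : 0 <= \sum_(i in S | i != K) T H i * Tpow S T n i H'.
  by apply: sumr_ge0 => i _; apply: mulr_ge0; [apply: T_ge0 | apply: Tpow_ge0].
lra.
Qed.


Hypothesis psum : pSEF + pDEM = 1.

Lemma sc_eq (H : {set V * V}) : H \in S ->
  (single_edges H == set0) = (single_edges E == set0).
Proof. by move=> HS; rewrite -!cards_eq0 (card_const HS).2. Qed.

Lemma dc_eq (H : {set V * V}) : H \in S ->
  (double_edges H == set0) = (double_edges E == set0).
Proof. by move=> HS; rewrite -!cards_eq0 (card_const HS).1. Qed.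

Lemma sum_delta (H' : {set V * V}) : H' \in S -> \sum_(H in S) ((H == H')%:R : R) = 1.
Proof.
move=> H'S; rewrite (bigD1 H') //= eqxx big1 ?addr0 // => K /andP[_ KH].
by rewrite (negbTE KH).
Qed.

Lemma sum_delta' (H : {set V * V}) : H \in S -> \sum_(H' in S) ((H == H')%:R : R) = 1.
Proof.
move=> HS; rewrite (eq_bigr (fun K => (K == H)%:R)); first exact: sum_delta.
by move=> K _; rewrite eq_sym.
Qed.

Lemma row_SEF (H : {set V * V}) : H \in S -> \sum_(H' in S) T_SEF R H H' = 1.
Proof.
move=> HS; rewrite /T_SEF; case s0: (single_edges H == set0).
  exact: sum_delta'.
rewrite -mulr_suml -natr_sum fiber_sum ?divff // ?pnatr_eq0 ?cards_eq0 ?s0 //.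
by move=> [i j] eS; case: (SEF_props HS eS).
Qed.

Lemma row_DEM (H : {set V * V}) : H \in S -> \sum_(H' in S) T_DEM R H H' = 1.
Proof.
move=> HS; rewrite /T_DEM; case s0: (_ || _).
  exact: sum_delta'.
rewrite -mulr_suml -natr_sum fiber_sum ?divff //.
  by rewrite cardsX divff // pnatr_eq0 muln_eq0 !cards_eq0 s0.
move=> [[i j] [k l]] /setXP[eS dD]; by case: (DEM_props HS eS dD).
Qed.

Lemma col_SEF (H' : {set V * V}) : H' \in S -> \sum_(H in S) T_SEF R H H' = 1.
Proof.
move=> H'S; case s0: (single_edges E == set0).
  rewrite -(sum_delta H'S); apply: eq_bigr => H HS.
  by rewrite /T_SEF sc_eq // s0.
rewrite (eq_bigr (fun H => #|[set e in single_edges H | SEF e H == H']|%:R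
    / #|single_edges E|%:R)) => [|H HS]; last first.
  by rewrite /T_SEF sc_eq // s0 (card_const HS).2.
rewrite -mulr_suml -natr_sum (inv_count (M := @single_edges V) (f := @SEF V) (g := @rv V)) //.
- by rewrite (card_const H'S).2 divff // pnatr_eq0 cards_eq0 s0.
- by move=> H [i j] HS eS; apply: SEF_props.
- exact: rvK.
Qed.

Lemma col_DEM (H' : {set V * V}) : H' \in S -> \sum_(H in S) T_DEM R H H' = 1.
Proof.
move=> H'S; case s0: ((single_edges E == set0) || (double_edges E == set0)).
  rewrite -(sum_delta H'S); apply: eq_bigr => H HS.
  by rewrite /T_DEM sc_eq // dc_eq // s0.
rewrite (eq_bigr (fun H => #|[set p in setX (single_edges H) (double_edges H) | DEM p.1 p.2 H == H']|%:R
    / (#|single_edges E| * #|double_edges E|)%:R)) => [|H HS]; last first.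
  by rewrite /T_DEM sc_eq // dc_eq // s0 (card_const HS).2 (card_const HS).1.
rewrite -mulr_suml -natr_sum (inv_count
   (M := fun H => setX (single_edges H) (double_edges H))
   (f := fun p H => DEM p.1 p.2 H) (g := fun p => (rv p.2, rv p.1))) //.
- rewrite cardsX (card_const H'S).2 (card_const H'S).1 divff //.
  by rewrite pnatr_eq0 muln_eq0 !cards_eq0 s0.
- move=> H [[i j] [k l]] HS /setXP[eS dD].
  have [? ? ? ?] := DEM_props HS eS dD; split => //; apply/setXP; split => //.
- by move=> [[a b] [c d]].
Qed.

Lemma dstoch : doubly_stochastic S T.
Proof.
split.
- by move=> H H' _ _; apply: T_ge0.
- move=> H HS; rewrite /T_SM big_split /= -!mulr_sumr row_SEF // row_DEM //.
  by rewrite !mulr1.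
- move=> H' H'S; rewrite /T_SM big_split /= -!mulr_sumr col_SEF // col_DEM //.
  by rewrite !mulr1.
Qed.


Lemma meas_dec (H H' : {set V * V}) x y : x \in H -> x \notin H' -> y \in H' ->
  (#|(H :\ x :|: [set y]) :\: H'| < #|H :\: H'|)%N.
Proof.
move=> xH xH' yH'.
have -> : (H :\ x :|: [set y]) :\: H' = (H :\: H') :\ x.
  apply/setP=> w; rewrite !inE.
  case: (eqVneq w y) => [->|_] /=; first by rewrite yH' /= andbF.
  by case: (w != x); case: (w \in H); case: (w \in H').
by rewrite (cardsD1 x (H :\: H')) inE xH' xH.
Qed.

Lemma double_sym (H : {set V * V}) a b : (a, b) \in double_edges H -> (b, a) \in double_edges H.
Proof. by rewrite !inE /= andbC. Qed.

Lemma irr_step (H H' : {set V * V}) e : H \in S -> H' \in S -> e \in H -> e \notin H' ->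
  exists K, [/\ K \in S, 0 < T H K & (#|K :\: H'| < #|H :\: H'|)%N].
Proof.
move=> HS H'S; case: e => i j eH eH'.
have prH : pr H = pr H'.
  by move: HS H'S; rewrite !inS => /and3P[_ /eqP -> _] /and3P[_ /eqP -> _].
have jiH' : (j, i) \in H'.
  case: (pr_memP (H := H') (a := i) (b := j)) => [|h|//]; last by rewrite h in eH'.
  by rewrite -prH; exact: (pr_mem eH).
case jiH: ((j, i) \in H).
- have eD : (i, j) \in double_edges H by rewrite inE /= eH jiH.
  have eD' : (i, j) \notin double_edges H' by rewrite inE (negbTE eH').
  have : ~~ (double_edges H' \subset double_edges H).
    apply/negP=> sub.
    have /eqP eqd : double_edges H' == double_edges H.
      by rewrite eqEcard sub (card_const HS).1 (card_const H'S).1 leqnn.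
    by rewrite eqd eD in eD'.
  case/subsetPn => -[a b] abD' abD.
  have /andP[abH' baH'] : ((a, b) \in H') && ((b, a) \in H') by move: abD'; rewrite inE.
  have key : forall p q, (p, q) \in H -> (q, p) \notin H -> (p, q) \in H' -> (q, p) \in H' ->
      exists K, [/\ K \in S, 0 < T H K & (#|K :\: H'| < #|H :\: H'|)%N].
    move=> p q pqH qpH pqH' qpH'; exists (DEM (p, q) (i, j) H).
    have pqS : (p, q) \in single_edges H by rewrite inE /= pqH qpH.
    have [KS _ _ _] := DEM_props HS pqS eD.
    split => //; first by apply: T_pos_DEM; apply: T_DEM_pos.
    by rewrite /DEM /=; apply: meas_dec.
  case: (pr_memP (H := H) (a := a) (b := b)).
  + by rewrite prH; exact: (pr_mem abH').
  + move=> abH; apply: (key a b) => //.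
    by apply/negP=> baH; move: abD; rewrite inE /= abH baH.
  + move=> baH; apply: (key b a) => //.
    by apply/negP=> abH; move: abD; rewrite inE /= abH baH.
- have eS : (i, j) \in single_edges H by rewrite inE /= eH jiH.
  have [KS _ _] := SEF_props HS eS.
  exists (SEF (i, j) H); split => //; first by apply: T_pos_SEF; apply: T_SEF_pos.
  by rewrite /SEF /=; apply: meas_dec.
Qed.

Lemma irred : irreducible S T.
Proof.
move=> H H' HS H'S.
have base : forall K, K \in S -> K :\: H' = set0 -> exists n, 0 < Tpow S T n K H'.
  move=> K KS e0; exists 0%N.
  have /eqP -> : K == H'.
    rewrite eqEcard -setD_eq0 e0 eqxx /=.
    by move: KS H'S; rewrite !inS => /and3P[_ _ /eqP ->] /and3P[_ _ /eqP ->].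
  by rewrite /= eqxx ltr01.
move: {2}#|H :\: H'| (leqnn #|H :\: H'|) => m.
elim: m H HS => [|m IH] H HS hm; case: (set_0Vmem (H :\: H')) => [e0|[e eD]];
  try exact: base.
- by move: hm; rewrite leqn0 cards_eq0 => /eqP e0; rewrite e0 inE in eD.
- move: eD; rewrite inE => /andP[eH' eH].
  have [K [KS TK hK]] := irr_step HS H'S eH eH'.
  have [n hn] := IH K KS (leq_trans hK hm).
  by exists n.+1; apply: (Tpow_step KS TK hn).
Qed.

Lemma aper : double_edges E != set0 -> aperiodic S T.
Proof.
move=> dE H HS d hd.
have one : 0 < Tpow S T 0 H H by rewrite /= eqxx ltr01.
case s0: (single_edges H == set0).
  have t1 : 0 < Tpow S T 1 H H.
    apply: (Tpow_step HS _ one).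
    by rewrite /T_SM /T_SEF /T_DEM s0 /= eqxx !mulr1 psum ltr01.
  by move: (hd 1%N isT t1); rewrite dvdn1 => /eqP.
case/set0Pn: (negbT s0) => -[i j] eS.
have : double_edges H != set0 by rewrite -cards_eq0 (card_const HS).1 cards_eq0.
case/set0Pn => -[k l] dD.
have /andP[ijH jiH] : ((i, j) \in H) && ((j, i) \notin H) by move: eS; rewrite inE.
have /andP[klH lkH] : ((k, l) \in H) && ((l, k) \in H) by move: dD; rewrite inE.
have [KS jiS KH] := SEF_props HS eS.
have tHK := T_pos_SEF (T_SEF_pos eS).
have tKH : 0 < T (SEF (i, j) H) H by have := T_pos_SEF (T_SEF_pos jiS); rewrite KH.
have two : 0 < Tpow S T 2 H H := Tpow_step KS tHK (Tpow_step HS tKH one).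
have lkD := double_sym dD.
have [H1S klS1 jiD1 _] := DEM_props HS eS lkD.
have ijD1 := double_sym jiD1.
have lk_ij : (l, k) != (i, j).
  by apply/eqP=> -[e1 e2]; subst; rewrite klH in jiH.
have H2eq : DEM (k, l) (i, j) (DEM (i, j) (l, k) H) = SEF (i, j) H.
  by rewrite /DEM /SEF /=; apply: swap3.
have tHH1 := T_pos_DEM (T_DEM_pos eS lkD).
have tH1K : 0 < T (DEM (i, j) (l, k) H) (SEF (i, j) H).
  by have := T_pos_DEM (T_DEM_pos klS1 ijD1); rewrite H2eq.
have three : 0 < Tpow S T 3 H H :=
  Tpow_step H1S tHH1 (Tpow_step KS tH1K (Tpow_step HS tKH one)).
have := dvdn_sub (hd 3%N isT three) (hd 2%N isT two).
by rewrite dvdn1 => /eqP.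
Qed.

End P.

Unset Implicit Arguments.

Theorem lemma3p5 (R : realFieldType) (V : finType) (E : {set V * V})
  (pSEF pDEM : R) :
  loopless E ->
  0 < pSEF < 1 -> 0 < pDEM < 1 -> pSEF + pDEM = 1 ->
  [/\ doubly_stochastic (GG0 E) (T_SM pSEF pDEM),
      irreducible (GG0 E) (T_SM pSEF pDEM) &
      (double_edges E != set0 -> aperiodic (GG0 E) (T_SM pSEF pDEM))].
Proof.
move=> _ /andP[pS0 _] /andP[pD0 _] psum.
split; [exact: dstoch | exact: irred | exact: aper].
Qed.
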